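(* Let $\{x_n\}$ be a statistically convergent sequence in an $S$-metric space $(X,S)$. Then there is a convergent sequence $\{y_n\}$ in $X$ such that $x_n=y_n$ for almost all $n\in\mathbb N$, i.e. $\delta(\{n\in\mathbb N: x_n\ne y_n\})=0$.
   Context: An $S$-metric on a nonempty set $X$ is a function $S:X^3\to[0,\infty)$ such that for all $x,y,z,a\in X$: $S(x,y,z)=0$ if and only if $x=y=z$, and $S(x,y,z)\le S(x,x,a)+S(y,y,a)+S(z,z,a)$. A sequence $\{y_n\}$ converges to $y$ if for every $\varepsilon>0$ there is $k$ with $S(y_n,y_n,y)<\varepsilon$ for all $n\ge k$. For $B\subset\mathbb N$ the natural density is $\delta(B)=\lim_{n\to\infty}\frac{|\{k\in B:k\le n\}|}{n}$ when the limit exists. A sequence $\{x_n\}$ is statistically convergent to $x\in X$ if for every $\varepsilon>0$, $\delta(\{n\in\mathbb N: S(x_n,x_n,x)\ge\varepsilon\})=0$. *)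

(* Defs.v *)
From Stdlib Require Import Reals Lra ClassicalEpsilon.
Open Scope R_scope.

Record is_S_metric (X : Type) (S : X -> X -> X -> R) : Prop := {
  Sm_nonneg : forall x y z, 0 <= S x y z;
  Sm_zero : forall x y z, S x y z = 0 <-> (x = y /\ y = z);
  Sm_ineq : forall x y z a, S x y z <= S x x a + S y y a + S z z a
}.

Definition S_converges {X : Type} (S : X -> X -> X -> R) (y : nat -> X) (l : X) : Prop :=
  forall eps, 0 < eps -> exists k : nat, forall n, (n >= k)%nat -> S (y n) (y n) l < eps.

Definition ind (B : nat -> Prop) (k : nat) : R :=
  if excluded_middle_informative (B k) then 1 else 0.

Fixpoint count_upto (B : nat -> Prop) (n : nat) : R :=
  match n with
  | O => 0
  | S m => count_upto B m + ind B (S m)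
  end.

Definition has_density (B : nat -> Prop) (d : R) : Prop :=
  Un_cv (fun n => count_upto B (S n) / INR (S n)) d.

Definition stat_converges {X : Type} (S : X -> X -> X -> R) (x : nat -> X) (l : X) : Prop :=
  forall eps, 0 < eps -> has_density (fun n => (n >= 1)%nat /\ S (x n) (x n) l >= eps) 0.

(* Main.v *)
Require Import Defs.
From Stdlib Require Import Reals Lra Lia ClassicalEpsilon Arith.
Open Scope R_scope.

Lemma count_mono (B C : nat -> Prop) n :
  (forall k, (1 <= k <= n)%nat -> B k -> C k) -> count_upto B n <= count_upto C n.
Proof.
  induction n; simpl; intros H. lra.
  assert (count_upto B n <= count_upto C n) by (apply IHn; intros; apply H; [lia|auto]).
  unfold Defs.ind. destruct (excluded_middle_informative (B (S n))), (excluded_middle_informative (C (S n))); try lra.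
  exfalso; match goal with h : ~ C _ |- _ => apply h end; apply H; auto; lia.
Qed.

Lemma count_nonneg B n : 0 <= count_upto B n.
Proof. induction n; simpl; unfold Defs.ind; try destruct excluded_middle_informative; lra. Qed.

Lemma mono_w (w: nat->nat) (H: forall j, (w j < w (S j))%nat) a b :
  (a <= b)%nat -> (w a <= w b)%nat.
Proof. induction 1; [lia | specialize (H m); lia]. Qed.

Lemma segment (w : nat -> nat) (H: forall j, (w j < w (S j))%nat) (H0: w 0%nat = 0%nat) m :
  exists j, (w j <= m < w (S j))%nat.
Proof.
  induction m. exists 0%nat; specialize (H 0%nat); lia.
  destruct IHm as [j [h1 h2]]. destruct (le_lt_dec (w (S j)) (S m)).
  exists (S j); specialize (H (S j)); lia. exists j; lia.
Qed.

Fixpoint mkw (v: nat->nat) j := match j with O => O | S j' => Nat.max (S (mkw v j')) (S (v j)) end.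

Theorem theorem3p4 (X : Type) (x0 : X) (S : X -> X -> X -> R)
  (HS : is_S_metric X S) (x : nat -> X) (l : X)
  (Hx : stat_converges S x l) :
  exists (y : nat -> X) (m : X),
    S_converges S y m /\
    has_density (fun n => (n >= 1)%nat /\ x n <> y n) 0.
Proof.
  set (A := fun (j n : nat) => (n >= 1)%nat /\ S (x n) (x n) l >= / (INR j + 1)).
  assert (HA: forall j, exists N, forall n, (n >= N)%nat ->
     count_upto (A j) (Datatypes.S n) / INR (Datatypes.S n) < / (INR j + 1)).
  { intro j. assert (hp : 0 < / (INR j + 1)).
    { apply Rinv_0_lt_compat. pose proof (pos_INR j). lra. }
    destruct (Hx _ hp _ hp) as [N HN]. exists N. intros n hn. specialize (HN n hn).
    unfold R_dist in HN. rewrite Rminus_0_r in HN. apply Rabs_def2 in HN. unfold A. lra. }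
  pose (v := fun j => proj1_sig (constructive_indefinite_description _ (HA j))).
  assert (Hv : forall j n, (n >= v j)%nat ->
     count_upto (A j) (Datatypes.S n) / INR (Datatypes.S n) < / (INR j + 1)).
  { intro j. exact (proj2_sig (constructive_indefinite_description _ (HA j))). }
  pose (w := mkw v).
  assert (Hw : forall j, (w j < w (Datatypes.S j))%nat).
  { intro j. unfold w; simpl. lia. }
  assert (Hw0 : w 0%nat = 0%nat) by reflexivity.
  assert (HwS : forall j, (Datatypes.S (v (Datatypes.S j)) <= w (Datatypes.S j))%nat).
  { intro j. unfold w; simpl. lia. }
  assert (Amono : forall j j' n, (j' <= j)%nat -> A j' n -> A j n).
  { intros j j' n hj [h1 h2]. split; auto.
    assert (/ (INR j + 1) <= / (INR j' + 1)).
    { apply Rinv_le_contravar. pose proof (pos_INR j'). lra.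
      apply le_INR in hj. lra. }
    lra. }
  set (B := fun m => exists j, (w j <= m)%nat /\ A j m).
  set (y := fun n => if excluded_middle_informative (B n) then l else x n).
  assert (HK : forall eps, 0 < eps -> exists K, (1 <= K)%nat /\ / (INR K + 1) < eps).
  { intros eps he. destruct (archimed_cor1 eps he) as [K [hK1 hK2]].
    exists K. split. lia.
    assert (0 < INR K) by (apply lt_0_INR; lia).
    assert (/ (INR K + 1) < / INR K) by (apply Rinv_lt_contravar; nra).
    lra. }
  assert (Hge : forall K n j, (1 <= K)%nat -> (w K <= n)%nat -> (w j <= n < w (Datatypes.S j))%nat -> (K <= j)%nat).
  { intros K n j hK h1 h2. destruct (le_lt_dec K j); auto.
    assert (w (Datatypes.S j) <= w K)%nat by (apply mono_w; auto). lia. }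
  exists y, l. split.
  - intros eps he. destruct (HK eps he) as [K [hK1 hK2]].
    exists (w K). intros n hn. unfold y.
    destruct (excluded_middle_informative (B n)).
    + rewrite (proj2 (Sm_zero _ _ HS l l l) (conj eq_refl eq_refl)). lra.
    + destruct (segment w Hw Hw0 n) as [j hj].
      assert (hjK : (K <= j)%nat) by (eapply Hge; eauto).
      assert (hn1 : (n >= 1)%nat).
      { destruct K. lia. pose proof (HwS K). lia. }
      destruct (Rlt_or_le (S (x n) (x n) l) (/ (INR j + 1))) as [hlt|hle].
      * assert (/ (INR j + 1) <= / (INR K + 1)).
        { apply Rinv_le_contravar. pose proof (pos_INR K). lra.
          apply le_INR in hjK. lra. }
        lra.
      * exfalso. match goal with h : ~ B _ |- _ => apply h end. exists j. split. lia. split; auto. lra.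
  - unfold has_density, Un_cv. intros eps he. destruct (HK eps he) as [K [hK1 hK2]].
    exists (w K). intros n hn. unfold R_dist. rewrite Rminus_0_r.
    assert (hpos : 0 < INR (Datatypes.S n)) by (apply lt_0_INR; lia).
    rewrite Rabs_pos_eq.
    2:{ apply Rmult_le_pos. apply count_nonneg. left; apply Rinv_0_lt_compat; auto. }
    destruct (segment w Hw Hw0 (Datatypes.S n)) as [j hj].
    assert (hjK : (K <= j)%nat) by (apply (Hge K (Datatypes.S n) j); auto; lia).
    assert (Hc : count_upto (fun n0 => (n0 >= 1)%nat /\ x n0 <> y n0) (Datatypes.S n)
                 <= count_upto (A j) (Datatypes.S n)).
    { apply count_mono. intros k hk [_ hxy].
      assert (hB : B k).
      { unfold y in hxy. destruct (excluded_middle_informative (B k)); auto. congruence. }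
      destruct hB as [j0 [hj0 hA]]. apply (Amono j j0); auto.
      destruct (le_lt_dec j0 j); auto.
      assert (w (Datatypes.S j) <= w j0)%nat by (apply mono_w; auto). lia. }
    destruct j as [|j']. lia.
    assert (hv : (n >= v (Datatypes.S j'))%nat) by (pose proof (HwS j'); lia).
    specialize (Hv _ _ hv).
    assert (/ (INR (Datatypes.S j') + 1) <= / (INR K + 1)).
    { apply Rinv_le_contravar. pose proof (pos_INR K). lra.
      apply le_INR in hjK. lra. }
    assert (count_upto (fun n0 => (n0 >= 1)%nat /\ x n0 <> y n0) (Datatypes.S n) / INR (Datatypes.S n)
            <= count_upto (A (Datatypes.S j')) (Datatypes.S n) / INR (Datatypes.S n)).
    { apply Rmult_le_compat_r; auto. left; apply Rinv_0_lt_compat; auto. }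
    lra.
Qed.
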